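(* Let $A$ be a braided group in $\mathcal C$, and for a right crossed module $(Z,\mu_r,\Delta_r)$ over $A$ put $\sigma_{Z/A}:=\mu_r\circ(Z\otimes S)\circ\Delta_r$. Then for all right crossed modules $X,Y$ over $A$, $\Psi^{\mathcal{YD}}_{Y,X}\circ\sigma_{(Y\otimes X)/A}\circ\Psi^{\mathcal{YD}}_{X,Y}=\Psi_{Y,X}\circ(\sigma_{Y/A}\otimes\sigma_{X/A})\circ\Psi_{X,Y}$, where $Y\otimes X$ is the tensor product crossed module and $\Psi^{\mathcal{YD}}$ is the braiding of $\mathcal{YD}(\mathcal C)^A_A$.
   Context: $\mathcal C$ is a braided monoidal category, assumed strict, with tensor product $\otimes$, unit $\underline 1$ and braiding $\Psi_{X,Y}:X\otimes Y\to Y\otimes X$. Inside tensor products of morphisms an object name $X$ stands for ${\rm id}_X$. A braided group is a bialgebra $(A,\mu,\eta,\Delta,\epsilon)$ in $\mathcal C$ (with $\Delta\circ\mu=(\mu\otimes\mu)\circ(A\otimes\Psi_{A,A}\otimes A)\circ(\Delta\otimes\Delta)$ and the unit/counit compatibilities) with antipode $S$: $\mu\circ(S\otimes A)\circ\Delta=\eta\circ\epsilon=\mu\circ(A\otimes S)\circ\Delta$. A right crossed module over $A$ is a right $A$-module $\mu_r:X\otimes A\to X$ and right $A$-comodule $\Delta_r:X\to X\otimes A$ such that $(X\otimes\mu)\circ(\Psi_{A,X}\otimes A)\circ(A\otimes(\Delta_r\circ\mu_r))\circ(\Psi_{X,A}\otimes A)\circ(X\otimes\Delta)=(\mu_r\otimes\mu)\circ(X\otimes\Psi_{A,A}\otimes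 A)\circ(\Delta_r\otimes\Delta)$. The tensor product crossed module $X\otimes Y$ has action $(\mu^X_r\otimes\mu^Y_r)\circ(X\otimes\Psi_{Y,A}\otimes A)\circ(X\otimes Y\otimes\Delta)$ and coaction $(X\otimes Y\otimes\mu)\circ(X\otimes\Psi_{A,Y}\otimes A)\circ(\Delta^X_r\otimes\Delta^Y_r)$. The braiding of $\mathcal{YD}(\mathcal C)^A_A$ is $\Psi^{\mathcal{YD}}_{X,Y}:=(Y\otimes\mu^X_r)\circ(\Psi_{X,Y}\otimes A)\circ(X\otimes\Delta^Y_r)$. *)

(* Defs.v *)
Set Implicit Arguments.
Unset Strict Implicit.

Record Category := {
  Ob :> Type;
  Hom : Ob -> Ob -> Type;
  comp : forall X Y Z : Ob, Hom Y Z -> Hom X Y -> Hom X Z;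
  idm : forall X : Ob, Hom X X;
  comp_assoc : forall (X Y Z W : Ob) (h : Hom Z W) (g : Hom Y Z) (f : Hom X Y),
      comp h (comp g f) = comp (comp h g) f;
  comp_idl : forall (X Y : Ob) (f : Hom X Y), comp (idm Y) f = f;
  comp_idr : forall (X Y : Ob) (f : Hom X Y), comp f (idm X) = f }.

Arguments Hom {c} X Y.
Arguments comp {c X Y Z} g f.
Arguments idm {c} X.

Notation "g ∘ f" := (comp g f) (at level 40, left associativity).

(* In a
   strict monoidal category the associativity / unit constraints are
   equalities of objects, and these casts are the (identity) constraints. *)
Definition castH {C : Category} {X Y : C} (e : X = Y) : Hom X Y :=
  match e in (_ = Y') return Hom X Y' with eq_refl => idm X end.

Record Braided (C : Category) := {
  tens : C -> C -> C;
  one : C;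
  tensm : forall X Y X' Y' : C, Hom X X' -> Hom Y Y' -> Hom (tens X Y) (tens X' Y');
  tensm_comp : forall (X Y Z X' Y' Z' : C) (f : Hom X Y) (g : Hom Y Z)
      (f' : Hom X' Y') (g' : Hom Y' Z'),
      tensm (g ∘ f) (g' ∘ f') = tensm g g' ∘ tensm f f';
  tensm_id : forall X Y : C, tensm (idm X) (idm Y) = idm (tens X Y);
  tensA : forall X Y Z : C, tens (tens X Y) Z = tens X (tens Y Z);
  tens1l : forall X : C, tens one X = X;
  tens1r : forall X : C, tens X one = X;
  tensmA : forall (X Y Z X' Y' Z' : C) (f : Hom X X') (g : Hom Y Y') (h : Hom Z Z'),
      castH (tensA X' Y' Z') ∘ tensm (tensm f g) h
      = tensm f (tensm g h) ∘ castH (tensA X Y Z);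
  tensm1l : forall (X Y : C) (f : Hom X Y),
      castH (tens1l Y) ∘ tensm (idm one) f = f ∘ castH (tens1l X);
  tensm1r : forall (X Y : C) (f : Hom X Y),
      castH (tens1r Y) ∘ tensm f (idm one) = f ∘ castH (tens1r X);
  braid : forall X Y : C, Hom (tens X Y) (tens Y X);
  braid_iso : forall X Y : C, exists g : Hom (tens Y X) (tens X Y),
      g ∘ braid X Y = idm (tens X Y) /\ braid X Y ∘ g = idm (tens Y X);
  braid_nat : forall (X Y X' Y' : C) (f : Hom X X') (g : Hom Y Y'),
      braid X' Y' ∘ tensm f g = tensm g f ∘ braid X Y;
  braid_hex1 : forall X Y Z : C,
      braid (tens X Y) Z =
      castH (tensA Z X Y) ∘ tensm (braid X Z) (idm Y)
      ∘ castH (eq_sym (tensA X Z Y)) ∘ tensm (idm X) (braid Y Z)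
      ∘ castH (tensA X Y Z);
  braid_hex2 : forall X Y Z : C,
      braid X (tens Y Z) =
      castH (eq_sym (tensA Y Z X)) ∘ tensm (idm Y) (braid X Z)
      ∘ castH (tensA Y X Z) ∘ tensm (braid X Y) (idm Z)
      ∘ castH (eq_sym (tensA X Y Z)) }.

Arguments tens {C} b X Y.
Arguments one {C} b.
Arguments tensm {C} b {X Y X' Y'} f g.
Arguments tensA {C} b X Y Z.
Arguments tens1l {C} b X.
Arguments tens1r {C} b X.
Arguments braid {C} b X Y.

Section Alg.
Context {C : Category} (B : Braided C).

Local Notation "X ⊗ Y" := (tens B X Y) (at level 34, left associativity).
Local Notation "f ⊠ g" := (tensm B f g) (at level 34, left associativity).

Definition assocm (X Y Z : C) : Hom ((X ⊗ Y) ⊗ Z) (X ⊗ (Y ⊗ Z)) :=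
  castH (tensA B X Y Z).
Definition assocmI (X Y Z : C) : Hom (X ⊗ (Y ⊗ Z)) ((X ⊗ Y) ⊗ Z) :=
  castH (eq_sym (tensA B X Y Z)).
Definition lu (X : C) : Hom (one B ⊗ X) X := castH (tens1l B X).
Definition luI (X : C) : Hom X (one B ⊗ X) := castH (eq_sym (tens1l B X)).
Definition ru (X : C) : Hom (X ⊗ one B) X := castH (tens1r B X).
Definition ruI (X : C) : Hom X (X ⊗ one B) := castH (eq_sym (tens1r B X)).

(* X (x) Psi_{Y,Z} (x) W : X Y Z W -> X Z Y W, as a map (XY)(ZW) -> (XZ)(YW) *)
Definition mid (X Y Z W : C) : Hom ((X ⊗ Y) ⊗ (Z ⊗ W)) ((X ⊗ Z) ⊗ (Y ⊗ W)) :=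
  assocmI X Z (Y ⊗ W) ∘ (idm X ⊠ assocm Z Y W)
  ∘ (idm X ⊠ (braid B Y Z ⊠ idm W)) ∘ (idm X ⊠ assocmI Y Z W)
  ∘ assocm X Y (Z ⊗ W).

Record BraidedGroup := {
  bgA : C;
  bg_mu : Hom (bgA ⊗ bgA) bgA;
  bg_eta : Hom (one B) bgA;
  bg_Delta : Hom bgA (bgA ⊗ bgA);
  bg_eps : Hom bgA (one B);
  bg_S : Hom bgA bgA;
  bg_mu_assoc : bg_mu ∘ (bg_mu ⊠ idm bgA)
                = bg_mu ∘ (idm bgA ⊠ bg_mu) ∘ assocm bgA bgA bgA;
  bg_mu_unitl : bg_mu ∘ (bg_eta ⊠ idm bgA) = lu bgA;
  bg_mu_unitr : bg_mu ∘ (idm bgA ⊠ bg_eta) = ru bgA;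
  bg_coassoc : assocm bgA bgA bgA ∘ (bg_Delta ⊠ idm bgA) ∘ bg_Delta
               = (idm bgA ⊠ bg_Delta) ∘ bg_Delta;
  bg_counitl : lu bgA ∘ (bg_eps ⊠ idm bgA) ∘ bg_Delta = idm bgA;
  bg_counitr : ru bgA ∘ (idm bgA ⊠ bg_eps) ∘ bg_Delta = idm bgA;
  bg_bialg : bg_Delta ∘ bg_mu
             = (bg_mu ⊠ bg_mu) ∘ mid bgA bgA bgA bgA ∘ (bg_Delta ⊠ bg_Delta);
  bg_Delta_eta : bg_Delta ∘ bg_eta = (bg_eta ⊠ bg_eta) ∘ luI (one B);
  bg_eps_mu : bg_eps ∘ bg_mu = lu (one B) ∘ (bg_eps ⊠ bg_eps);
  bg_eps_eta : bg_eps ∘ bg_eta = idm (one B);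
  bg_antipode_l : bg_mu ∘ (bg_S ⊠ idm bgA) ∘ bg_Delta = bg_eta ∘ bg_eps;
  bg_antipode_r : bg_mu ∘ (idm bgA ⊠ bg_S) ∘ bg_Delta = bg_eta ∘ bg_eps }.

Section CrossedModules.
Variable H : BraidedGroup.
Local Notation A := (bgA H).
Local Notation mu := (bg_mu H).
Local Notation eta := (bg_eta H).
Local Notation Delta := (bg_Delta H).
Local Notation eps := (bg_eps H).
Local Notation S := (bg_S H).

Record RCrossedModule := {
  cmX : C;
  cm_act : Hom (cmX ⊗ A) cmX;
  cm_coact : Hom cmX (cmX ⊗ A);
  cm_act_assoc : cm_act ∘ (cm_act ⊠ idm A)
                 = cm_act ∘ (idm cmX ⊠ mu) ∘ assocm cmX A A;
  cm_act_unit : cm_act ∘ (idm cmX ⊠ eta) = ru cmX;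
  cm_coact_coassoc : (cm_coact ⊠ idm A) ∘ cm_coact
                     = assocmI cmX A A ∘ (idm cmX ⊠ Delta) ∘ cm_coact;
  cm_coact_counit : (idm cmX ⊠ eps) ∘ cm_coact = ruI cmX;
  cm_YD :
    (idm cmX ⊠ mu) ∘ assocm cmX A A ∘ (braid B A cmX ⊠ idm A)
    ∘ assocmI A cmX A ∘ (idm A ⊠ (cm_coact ∘ cm_act)) ∘ assocm A cmX A
    ∘ (braid B cmX A ⊠ idm A) ∘ assocmI cmX A A ∘ (idm cmX ⊠ Delta)
    = (cm_act ⊠ mu) ∘ mid cmX A A A ∘ (cm_coact ⊠ Delta) }.

Definition sigma {Z : C} (act : Hom (Z ⊗ A) Z) (coact : Hom Z (Z ⊗ A)) : Hom Z Z :=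
  act ∘ (idm Z ⊠ S) ∘ coact.

Definition tens_act (X Y : RCrossedModule) :
    Hom ((cmX X ⊗ cmX Y) ⊗ A) (cmX X ⊗ cmX Y) :=
  (cm_act X ⊠ cm_act Y) ∘ mid (cmX X) (cmX Y) A A
  ∘ (idm (cmX X ⊗ cmX Y) ⊠ Delta).

Definition tens_coact (X Y : RCrossedModule) :
    Hom (cmX X ⊗ cmX Y) ((cmX X ⊗ cmX Y) ⊗ A) :=
  (idm (cmX X ⊗ cmX Y) ⊠ mu) ∘ mid (cmX X) A (cmX Y) A
  ∘ (cm_coact X ⊠ cm_coact Y).

Definition ydbraid (X Y : RCrossedModule) : Hom (cmX X ⊗ cmX Y) (cmX Y ⊗ cmX X) :=
  (idm (cmX Y) ⊠ cm_act X) ∘ assocm (cmX Y) (cmX X) A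
  ∘ (braid B (cmX X) (cmX Y) ⊠ idm A) ∘ assocmI (cmX X) (cmX Y) A
  ∘ (idm (cmX X) ⊠ cm_coact Y).

End CrossedModules.
End Alg.

Arguments sigma {C B H Z} act coact.
Arguments tens_act {C B H} X Y.
Arguments tens_coact {C B H} X Y.
Arguments ydbraid {C B H} X Y.

(* Submission.v *)
Require Import Defs.
From Stdlib Require Import List ProofIrrelevance.
Import ListNotations.

Module Infra.
Set Implicit Arguments.
Unset Strict Implicit.

Section Infra.
Context {C : Category} (B : Braided C).
Local Notation "X ⊗ Y" := (tens B X Y) (at level 34, left associativity).
Local Notation "f ⊠ g" := (tensm B f g) (at level 34, left associativity).

Lemma castH_pi {X Y : C} (e e' : X = Y) : castH e = castH e'.
Proof. now rewrite (proof_irrelevance _ e e'). Qed.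
Lemma castH_refl {X : C} (e : X = X) : castH e = idm X.
Proof. now rewrite (proof_irrelevance _ e eq_refl). Qed.
Lemma castH_trans {X Y Z : C} (e1 : X = Y) (e2 : Y = Z) :
  castH e2 ∘ castH e1 = castH (eq_trans e1 e2).
Proof. destruct e2; simpl. apply comp_idl. Qed.
Lemma castH_trans' {W X Y Z : C} (f : Hom W X) (e1 : X = Y) (e2 : Y = Z) :
  castH e2 ∘ (castH e1 ∘ f) = castH (eq_trans e1 e2) ∘ f.
Proof. rewrite comp_assoc, castH_trans. reflexivity. Qed.
Lemma tensm_cast {X X' Y Y' : C} (e1 : X = X') (e2 : Y = Y') :
  castH e1 ⊠ castH e2 = castH (f_equal2 (tens B) e1 e2).
Proof. destruct e1, e2; rewrite !castH_refl; apply (tensm_id B). Qed.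
Lemma tensm_castl {X X' Y : C} (e1 : X = X') :
  castH e1 ⊠ idm Y = castH (f_equal2 (tens B) e1 eq_refl).
Proof. destruct e1; rewrite !castH_refl; apply (tensm_id B). Qed.
Lemma tensm_castr {X Y Y' : C} (e2 : Y = Y') :
  idm X ⊠ castH e2 = castH (f_equal2 (tens B) eq_refl e2).
Proof. destruct e2; rewrite !castH_refl; apply (tensm_id B). Qed.

Lemma tensm_comp3 {X Y Z W X' Y' Z' W' : C} (f : Hom X Y) (g : Hom Y Z) (h : Hom Z W)
  (f' : Hom X' Y') (g' : Hom Y' Z') (h' : Hom Z' W') :
  (h ∘ g ∘ f) ⊠ (h' ∘ g' ∘ f') = (h ⊠ h') ∘ (g ⊠ g') ∘ (f ⊠ f').
Proof. rewrite !tensm_comp. reflexivity. Qed.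

Lemma tensm_idl_split {X Y X' Y' : C} (f : Hom X X') (g : Hom Y Y') :
  f ⊠ g = (f ⊠ idm Y') ∘ (idm X ⊠ g).
Proof. rewrite <- tensm_comp, comp_idl, comp_idr. reflexivity. Qed.

Fixpoint ev (l : list C) : C :=
  match l with
  | [] => one B
  | x :: l' => match l' with [] => x | _ :: _ => x ⊗ ev l' end
  end.

Lemma ev_app (l1 l2 : list C) : ev (l1 ++ l2) = ev l1 ⊗ ev l2.
Proof.
  induction l1 as [|x l1 IH].
  - simpl. symmetry. apply tens1l.
  - destruct l1 as [|y l1'].
    + simpl. destruct l2 as [|z l2]. simpl. symmetry. apply tens1r. reflexivity.
    + change (ev (x :: ((y :: l1') ++ l2)) = (x ⊗ ev (y :: l1')) ⊗ ev l2).
      transitivity (x ⊗ ev ((y :: l1') ++ l2)). reflexivity.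
      rewrite IH. symmetry. apply tensA.
Qed.

Definition HomL (l1 l2 : list C) := Hom (ev l1) (ev l2).
Definition I (l : list C) : HomL l l := idm (ev l).

Definition tensL {l1 l1' l2 l2'} (f : HomL l1 l1') (g : HomL l2 l2') : HomL (l1 ++ l2) (l1' ++ l2') :=
  castH (eq_sym (ev_app l1' l2')) ∘ (f ⊠ g) ∘ castH (ev_app l1 l2).

Definition tr {l1 l1' l2 l2'} (e1 : l1 = l1') (e2 : l2 = l2') (f : HomL l1 l2) : HomL l1' l2' :=
  castH (f_equal ev e2) ∘ f ∘ castH (f_equal ev (eq_sym e1)).

Lemma tr_refl {l1 l2} (e1 : l1 = l1) (e2 : l2 = l2) (f : HomL l1 l2) : tr e1 e2 f = f.
Proof. unfold tr. rewrite !castH_refl, comp_idl, comp_idr. reflexivity. Qed.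

Definition braidL (l1 l2 : list C) : HomL (l1 ++ l2) (l2 ++ l1) :=
  castH (eq_sym (ev_app l2 l1)) ∘ braid B (ev l1) (ev l2) ∘ castH (ev_app l1 l2).


Ltac rassoc := repeat rewrite <- comp_assoc.
Ltac ccast := rassoc; repeat (rewrite tensm_castl || rewrite tensm_castr || rewrite comp_idl || rewrite comp_idr || rewrite castH_trans' || rewrite castH_trans || rewrite castH_refl).

Lemma tensL_comp {a b c a' b' c'} (f : HomL b c) (f' : HomL a b) (g : HomL b' c') (g' : HomL a' b') :
  tensL (f ∘ f') (g ∘ g') = tensL f g ∘ tensL f' g'.
Proof. unfold tensL. rewrite (tensm_comp B). ccast. reflexivity. Qed.

Lemma tensL_id (l1 l2 : list C) : tensL (I l1) (I l2) = I (l1 ++ l2).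
Proof. unfold tensL, I. rewrite (tensm_id B). ccast. reflexivity. Qed.

Lemma tensm_2l {X Y Z V V' : C} (x : Hom Y Z) (y : Hom X Y) (h : Hom V V') :
  (x ∘ y) ⊠ h = (x ⊠ idm V') ∘ (y ⊠ h).
Proof. rewrite <- (tensm_comp B), comp_idl. reflexivity. Qed.
Lemma tensm_2r {X Y Z V V' : C} (x : Hom Y Z) (y : Hom X Y) (h : Hom V V') :
  h ⊠ (x ∘ y) = (idm V' ⊠ x) ∘ (h ⊠ y).
Proof. rewrite <- (tensm_comp B), comp_idl. reflexivity. Qed.
Lemma tensm_idid (X Y : C) : idm X ⊠ idm Y = idm (X ⊗ Y).
Proof. apply (tensm_id B). Qed.

Lemma tensm_3l {X Y Z W V V' : C} (x : Hom Z W) (u : Hom Y Z) (y : Hom X Y) (h : Hom V V') :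
  (x ∘ u ∘ y) ⊠ h = (x ⊠ idm V') ∘ (u ⊠ h) ∘ (y ⊠ idm V).
Proof. rewrite <- !(tensm_comp B), !comp_idl, comp_idr. reflexivity. Qed.
Lemma tensm_3r {X Y Z W V V' : C} (x : Hom Z W) (u : Hom Y Z) (y : Hom X Y) (h : Hom V V') :
  h ⊠ (x ∘ u ∘ y) = (idm V' ⊠ x) ∘ (h ⊠ u) ∘ (idm V ⊠ y).
Proof. rewrite <- !(tensm_comp B), !comp_idl, comp_idr. reflexivity. Qed.

Lemma tensmA' {X Y Z X' Y' Z' W : C} (f : Hom X X') (g : Hom Y Y') (h : Hom Z Z')
  (e : (X' ⊗ Y') ⊗ Z' = W) :
  castH e ∘ ((f ⊠ g) ⊠ h) = castH (eq_trans (eq_sym (tensA B X' Y' Z')) e) ∘ (f ⊠ (g ⊠ h)) ∘ castH (tensA B X Y Z).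
Proof.
  rewrite <- (comp_assoc _ (f ⊠ (g ⊠ h))), <- (tensmA B), comp_assoc, castH_trans.
  f_equal. apply castH_pi.
Qed.

Lemma tensL_assoc {a a' b b' c c'} (f : HomL a a') (g : HomL b b') (h : HomL c c') :
  tensL (tensL f g) h = tr (app_assoc a b c) (app_assoc a' b' c') (tensL f (tensL g h)).
Proof.
  unfold tensL, tr.
  rewrite tensm_3l, tensm_3r, tensm_castl, tensm_castl, tensm_castr, tensm_castr.
  rassoc.
  rewrite (comp_assoc (castH _) (tensm B (tensm B f g) h)).
  rewrite tensmA'. ccast. f_equal. apply castH_pi. f_equal. apply castH_pi.
Qed.

Lemma tensL_split {l1 l1' l2 l2'} (f : HomL l1 l1') (g : HomL l2 l2') :
  tensL f g = tensL f (I l2') ∘ tensL (I l1) g.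
Proof. rewrite <- tensL_comp. unfold I. rewrite comp_idl, comp_idr. reflexivity. Qed.
Lemma tensL_split' {l1 l1' l2 l2'} (f : HomL l1 l1') (g : HomL l2 l2') :
  tensL f g = tensL (I l1') g ∘ tensL f (I l2).
Proof. rewrite <- tensL_comp. unfold I. rewrite comp_idl, comp_idr. reflexivity. Qed.
Lemma tensL_compl {a b c l} (f : HomL b c) (f' : HomL a b) :
  tensL (f ∘ f') (I l) = tensL f (I l) ∘ tensL f' (I l).
Proof. rewrite <- tensL_comp. unfold I. rewrite comp_idl. reflexivity. Qed.
Lemma tensL_compr {a b c l} (f : HomL b c) (f' : HomL a b) :
  tensL (I l) (f ∘ f') = tensL (I l) f ∘ tensL (I l) f'.
Proof. rewrite <- tensL_comp. unfold I. rewrite comp_idl. reflexivity. Qed.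

Lemma castH_move_l {X Y Z : C} (e : Y = Z) (x : Hom X Y) (y : Hom X Z) :
  castH e ∘ x = y -> x = castH (eq_sym e) ∘ y.
Proof. intros <-. rewrite comp_assoc, castH_trans, castH_refl, comp_idl. reflexivity. Qed.
Lemma castH_move_r {X Y Z : C} (e : X = Y) (x : Hom Y Z) (y : Hom X Z) :
  x ∘ castH e = y -> x = y ∘ castH (eq_sym e).
Proof. intros <-. rewrite <- comp_assoc, castH_trans, castH_refl, comp_idr. reflexivity. Qed.

Lemma tensm1l' {X Y : C} (f : Hom X Y) : idm (one B) ⊠ f = castH (eq_sym (tens1l B Y)) ∘ f ∘ castH (tens1l B X).
Proof. rewrite <- comp_assoc. apply castH_move_l. rewrite (tensm1l B). reflexivity. Qed.
Lemma tensm1r' {X Y : C} (f : Hom X Y) : f ⊠ idm (one B) = castH (eq_sym (tens1r B Y)) ∘ f ∘ castH (tens1r B X).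
Proof. rewrite <- comp_assoc. apply castH_move_l. rewrite (tensm1r B). reflexivity. Qed.

Lemma tensL_nil_l {l l'} (f : HomL l l') : tensL (I []) f = f.
Proof. unfold tensL, I. simpl ev. rewrite tensm1l'. ccast. reflexivity. Qed.
Lemma tensL_nil_r {l l'} (f : HomL l l') :
  tensL f (I []) = tr (eq_sym (app_nil_r l)) (eq_sym (app_nil_r l')) f.
Proof. unfold tensL, I, tr. simpl ev. rewrite tensm1r'. ccast. f_equal. apply castH_pi. f_equal. apply castH_pi. Qed.

Lemma braid_cast {X X' Y Y' : C} (e1 : X = X') (e2 : Y = Y') :
  braid B X' Y' = castH (f_equal2 (tens B) e2 e1) ∘ braid B X Y ∘ castH (f_equal2 (tens B) (eq_sym e1) (eq_sym e2)).
Proof. destruct e1, e2. rewrite !castH_refl, comp_idl, comp_idr. reflexivity. Qed.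

Lemma braidL_nat {l1 l1' l2 l2'} (f : HomL l1 l1') (g : HomL l2 l2') :
  braidL l1' l2' ∘ tensL f g = tensL g f ∘ braidL l1 l2.
Proof.
  unfold braidL, tensL. ccast.
  rewrite (comp_assoc (braid B _ _) (tensm B f g)), (braid_nat B). ccast. reflexivity.
Qed.

Ltac pis := repeat (apply castH_pi || f_equal).

Lemma braidL_hex1 (l1 l2 l3 : list C) :
  braidL (l1 ++ l2) l3 =
  tr (eq_sym (app_assoc l1 l3 l2)) (eq_sym (app_assoc l3 l1 l2)) (tensL (braidL l1 l3) (I l2))
  ∘ tr (app_assoc l1 l2 l3) eq_refl (tensL (I l1) (braidL l2 l3)).
Proof.
  unfold braidL, tensL, tr, I.
  rewrite (braid_cast (eq_sym (ev_app l1 l2)) eq_refl), (braid_hex1 B).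
  rewrite tensm_3l, tensm_3r.
  unfold assocm, assocmI. ccast. pis.
Qed.

Lemma braidL_hex2 (l1 l2 l3 : list C) :
  braidL l1 (l2 ++ l3) =
  tr eq_refl (app_assoc l2 l3 l1) (tensL (I l2) (braidL l1 l3))
  ∘ tr (eq_sym (app_assoc l1 l2 l3)) (eq_sym (app_assoc l2 l1 l3)) (tensL (braidL l1 l2) (I l3)).
Proof.
  unfold braidL, tensL, tr, I.
  rewrite (braid_cast eq_refl (eq_sym (ev_app l2 l3))), (braid_hex2 B).
  rewrite tensm_3l, tensm_3r.
  unfold assocm, assocmI. ccast. pis.
Qed.

Lemma idem_iso {X Y : C} (b : Hom X Y) (e : Y = X) :
  (exists g : Hom Y X, g ∘ b = idm X /\ b ∘ g = idm Y) ->
  b = b ∘ (castH e ∘ b) -> b = castH (eq_sym e).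
Proof.
  intros [g [Hg1 Hg2]] H.
  assert (H2 : castH e ∘ b = idm X).
  { rewrite <- (comp_idl (castH e ∘ b)), <- Hg1, <- comp_assoc, <- H. reflexivity. }
  rewrite <- (comp_idl b), <- (castH_refl (eq_trans e (eq_sym e))), <- castH_trans, <- comp_assoc, H2, comp_idr.
  reflexivity.
Qed.

Lemma braid_one_l (Z : C) : exists e, braid B (one B) Z = castH e.
Proof.
  pose proof (braid_hex1 B (one B) (one B) Z) as H.
  rewrite (braid_cast (eq_sym (tens1l B (one B))) (eq_refl Z)) in H.
  rewrite tensm1r', tensm1l' in H.
  rassoc. revert H. ccast. intro H.
  apply castH_move_l in H. revert H. ccast. intro H.
  apply castH_move_r in H. revert H. ccast. intro H.
  eexists. apply idem_iso. apply (braid_iso B). exact H.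
Qed.

Lemma braid_one_r (Z : C) : exists e, braid B Z (one B) = castH e.
Proof.
  pose proof (braid_hex2 B Z (one B) (one B)) as H.
  rewrite (braid_cast (eq_refl Z) (eq_sym (tens1l B (one B)))) in H.
  rewrite tensm1r', tensm1l' in H.
  rassoc. revert H. ccast. intro H.
  apply castH_move_l in H. revert H. ccast. intro H.
  apply castH_move_r in H. revert H. ccast. intro H.
  eexists. apply idem_iso. apply (braid_iso B). exact H.
Qed.

Lemma braidL_nil_l (l : list C) : braidL [] l = tr eq_refl (eq_sym (app_nil_r l)) (I l).
Proof.
  unfold braidL, tr, I. destruct (braid_one_l (ev l)) as [e He]. simpl ev. rewrite He. ccast. pis.
Qed.
Lemma braidL_nil_r (l : list C) : braidL l [] = tr (eq_sym (app_nil_r l)) eq_refl (I l).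
Proof.
  unfold braidL, tr, I. destruct (braid_one_r (ev l)) as [e He]. simpl ev. rewrite He. ccast. pis.
Qed.

Fixpoint appA (l m n : list C) : l ++ (m ++ n) = (l ++ m) ++ n :=
  match l with [] => eq_refl | x :: l' => f_equal (cons x) (appA l' m n) end.
Fixpoint appN (l : list C) : l ++ [] = l :=
  match l with [] => eq_refl | x :: l' => f_equal (cons x) (appN l') end.
Definition A5 (l s m x : list C) : (l ++ (s ++ m)) ++ x = l ++ (s ++ (m ++ x)) :=
  eq_trans (eq_sym (appA l (s ++ m) x)) (f_equal (app l) (eq_sym (appA s m x))).

Definition trT {l1 l1' l2 l2'} (e1 : l1 = l1') (e2 : l2 = l2') (f : HomL l1 l2) : HomL l1' l2' :=
  match e1 in _ = a return HomL a l2' with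
  | eq_refl => match e2 in _ = b return HomL l1 b with eq_refl => f end end.

Lemma tr_pi {l1 l1' l2 l2'} (e1 e1' : l1 = l1') (e2 e2' : l2 = l2') (f : HomL l1 l2) : tr e1 e2 f = tr e1' e2' f.
Proof. now rewrite (proof_irrelevance _ e1 e1'), (proof_irrelevance _ e2 e2'). Qed.
Lemma trT_tr {l1 l1' l2 l2'} (e1 : l1 = l1') (e2 : l2 = l2') (f : HomL l1 l2) : trT e1 e2 f = tr e1 e2 f.
Proof. destruct e1, e2. simpl. rewrite tr_refl. reflexivity. Qed.
Lemma trT_pi {l1 l1' l2 l2'} (e1 e1' : l1 = l1') (e2 e2' : l2 = l2') (f : HomL l1 l2) : trT e1 e2 f = trT e1' e2' f.
Proof. now rewrite (proof_irrelevance _ e1 e1'), (proof_irrelevance _ e2 e2'). Qed.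
Lemma trT_refl {l1 l2} (e1 : l1 = l1) (e2 : l2 = l2) (f : HomL l1 l2) : trT e1 e2 f = f.
Proof. rewrite (trT_pi e1 eq_refl e2 eq_refl). reflexivity. Qed.
Lemma trT_trT {a a' a'' b b' b''} (e1 : a' = a'') (e2 : b' = b'') (e3 : a = a') (e4 : b = b') (f : HomL a b) :
  trT e1 e2 (trT e3 e4 f) = trT (eq_trans e3 e1) (eq_trans e4 e2) f.
Proof. destruct e1, e2, e3, e4. reflexivity. Qed.
Lemma trT_comp {a a' b b' c c'} (e1 e1' : b = b') (e2 : c = c') (e0 : a = a') (f : HomL b c) (g : HomL a b) :
  trT e1 e2 f ∘ trT e0 e1' g = trT e0 e2 (f ∘ g).
Proof. rewrite (proof_irrelevance _ e1' e1). destruct e0, e1, e2. reflexivity. Qed.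
Lemma tensL_trTr {l1 l1' a a' b b'} (f : HomL l1 l1') (e1 : a = a') (e2 : b = b') (g : HomL a b) :
  tensL f (trT e1 e2 g) = trT (f_equal (app l1) e1) (f_equal (app l1') e2) (tensL f g).
Proof. destruct e1, e2. reflexivity. Qed.
Lemma I_trT {a a'} (e1 e2 : a = a') : trT e1 e2 (I a) = I a'.
Proof. destruct e1. rewrite (proof_irrelevance _ e2 eq_refl). reflexivity. Qed.

Lemma tl_assoc {a a' b b' c c'} (f : HomL a a') (g : HomL b b') (h : HomL c c') :
  tensL (tensL f g) h = trT (appA a b c) (appA a' b' c') (tensL f (tensL g h)).
Proof. rewrite tensL_assoc, trT_tr. apply tr_pi. Qed.

Lemma tl_cl {a b c s t} (f : HomL b c) (g : HomL a b) (h : HomL s t) :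
  tensL (f ∘ g) h = tensL f (I t) ∘ tensL g h.
Proof. rewrite <- tensL_comp. unfold I. rewrite comp_idl. reflexivity. Qed.
Lemma tl_cr {a b c s t} (f : HomL b c) (g : HomL a b) (h : HomL s t) :
  tensL h (f ∘ g) = tensL (I t) f ∘ tensL h g.
Proof. rewrite <- tensL_comp. unfold I. rewrite comp_idl. reflexivity. Qed.
Lemma tl_IIx {a b s t} (x : HomL s t) :
  tensL (I a) (tensL (I b) x) = trT (eq_sym (appA a b s)) (eq_sym (appA a b t)) (tensL (I (a ++ b)) x).
Proof.
  rewrite <- tensL_id, tl_assoc, trT_trT. symmetry. apply trT_refl.
Qed.
Lemma Icomp_l {a b} (f : HomL a b) : I b ∘ f = f.
Proof. apply comp_idl. Qed.
Lemma Icomp_r {a b} (f : HomL a b) : f ∘ I a = f.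
Proof. apply comp_idr. Qed.

Lemma swp (l m r : list C) {s s' t t'} (f : HomL s s') (g : HomL t t') :
  tensL (I l) (tensL f (I (m ++ (t' ++ r)))) ∘ trT (A5 l s m (t ++ r)) (A5 l s m (t' ++ r)) (tensL (I (l ++ (s ++ m))) (tensL g (I r)))
  = trT (A5 l s' m (t ++ r)) (A5 l s' m (t' ++ r)) (tensL (I (l ++ (s' ++ m))) (tensL g (I r))) ∘ tensL (I l) (tensL f (I (m ++ (t ++ r)))).
Proof.
  assert (K : forall q (g0 : HomL t t'), trT (A5 l q m (t ++ r)) (A5 l q m (t' ++ r)) (tensL (I (l ++ (q ++ m))) (tensL g0 (I r)))
     = tensL (I l) (tensL (I q) (tensL (I m) (tensL g0 (I r))))).
  { intros q g0. rewrite (tl_IIx (a := q) (b := m)), tensL_trTr, (tl_IIx (a := l) (b := q ++ m)), !trT_trT.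
    apply trT_pi. }
  rewrite !K. rewrite <- !tensL_id. rewrite <- !tensL_comp. unfold I. rewrite !comp_idl, !comp_idr. reflexivity.
Qed.

Lemma braidL_hex1' (l1 l2 l3 : list C) :
  braidL (l1 ++ l2) l3 =
  trT (eq_sym (appA l1 l3 l2)) (eq_sym (appA l3 l1 l2)) (tensL (braidL l1 l3) (I l2))
  ∘ trT (appA l1 l2 l3) eq_refl (tensL (I l1) (braidL l2 l3)).
Proof. rewrite braidL_hex1, !trT_tr. f_equal; apply tr_pi. Qed.
Lemma braidL_hex2' (l1 l2 l3 : list C) :
  braidL l1 (l2 ++ l3) =
  trT eq_refl (appA l2 l3 l1) (tensL (I l2) (braidL l1 l3))
  ∘ trT (eq_sym (appA l1 l2 l3)) (eq_sym (appA l2 l1 l3)) (tensL (braidL l1 l2) (I l3)).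
Proof. rewrite braidL_hex2, !trT_tr. f_equal; apply tr_pi. Qed.
Lemma braidL_nil_l' (l : list C) : braidL [] l = trT eq_refl (eq_sym (appN l)) (I l).
Proof. rewrite braidL_nil_l, trT_tr. apply tr_pi. Qed.
Lemma braidL_nil_r' (l : list C) : braidL l [] = trT (eq_sym (appN l)) eq_refl (I l).
Proof. rewrite braidL_nil_r, trT_tr. apply tr_pi. Qed.
Lemma tl_nil_r {l l'} (f : HomL l l') : tensL f (I []) = trT (eq_sym (appN l)) (eq_sym (appN l')) f.
Proof. rewrite tensL_nil_r, trT_tr. apply tr_pi. Qed.
End Infra.

Ltac rassoc := repeat rewrite <- comp_assoc.
Ltac ccast := rassoc; repeat (rewrite tensm_idid || rewrite tensm_castl || rewrite tensm_castr || rewrite comp_idl || rewrite comp_idr || rewrite castH_trans' || rewrite castH_trans || rewrite castH_refl).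
Ltac pis := repeat (apply castH_pi || f_equal).
Ltac tsplit := repeat (rewrite tensm_2l || rewrite tensm_2r).
Ltac clean := cbn [trT appA appN A5 app f_equal eq_trans eq_sym].
Ltac cleanH Hx := cbn [trT appA appN A5 app f_equal eq_trans eq_sym] in Hx.
Ltac is_atom g := lazymatch g with
  | Infra.I _ _ => fail | tensL _ _ => fail | comp _ _ => fail | _ => idtac end.
Ltac not_I h := lazymatch h with Infra.I _ _ => fail | _ => idtac end.
Ltac nf1 := first [
    rewrite tl_cl | rewrite tl_cr
  | match goal with |- context [tensL (tensL ?f ?g) ?h] => let E := fresh in pose proof (tl_assoc f g h) as E; cleanH E; rewrite E; clear E; clean end
  | rewrite tensL_id
  | match goal with |- context [tensL (Infra.I _ ?a) (tensL (Infra.I _ ?b) ?x)] => let E := fresh in pose proof (tl_IIx (a:=a) (b:=b) x) as E; cleanH E; rewrite E; clear E; clean end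
  | rewrite Icomp_l | rewrite Icomp_r
  | match goal with |- context [tensL ?g ?h] => is_atom g; not_I h; let E := fresh in pose proof (tensL_split g h) as E; cleanH E; rewrite E; clear E end ].
Ltac nf := clean; repeat (nf1; clean); rassoc; clean.
Ltac nfH Hx := revert Hx; nf; intro Hx.
Ltac rnest x k := lazymatch x with ?a ∘ ?b => let r := rnest b k in constr:(a ∘ r) | _ => constr:(x ∘ k) end.
Ltac mkcont Hx Hk := lazymatch type of Hx with @eq ?T ?L ?R =>
  let T' := eval unfold HomL in T in lazymatch T' with Hom ?D _ =>
  assert (Hk : forall W (k : Hom W D), ltac:(let l := rnest L constr:(k) in let r := rnest R constr:(k) in exact (l = r)));
  [intros W k; transitivity (L ∘ k); [rassoc; reflexivity | rewrite Hx; rassoc; reflexivity] | ] end end.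
Ltac use E := let Hx := fresh "Hx" in let Hk := fresh "Hk" in
  pose proof E as Hx; nfH Hx; mkcont Hx Hk; first [rewrite Hk | rewrite Hx]; clear Hx Hk; nf.
Ltac usew E l r := use (f_equal (fun u => tensL (Infra.I _ l) (tensL u (Infra.I _ r))) E).
Ltac wrap := match goal with |- ?a = ?b =>
  let Hw := fresh "Hw" in
  assert (Hw : tensL (Infra.I _ []) (tensL a (Infra.I _ [])) = tensL (Infra.I _ []) (tensL b (Infra.I _ [])));
  [ | rewrite !tensL_nil_l, !tl_nil_r in Hw; cleanH Hw; exact Hw ] end.
Ltac chain_nth x n := lazymatch n with
 | O => lazymatch x with ?a ∘ _ => a | _ => x end
 | S ?n' => lazymatch x with _ ∘ ?b => chain_nth b n' end end.
Ltac atom_src g := let T := type of g in let T := eval cbn [app] in T in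
  lazymatch T with HomL _ ?s ?s' => s end.
Ltac atom_tgt g := let T := type of g in let T := eval cbn [app] in T in
  lazymatch T with HomL _ ?s ?s' => s' end.
Ltac swap_terms P Q :=
  lazymatch P with tensL (Infra.I _ ?l1) (tensL ?f (Infra.I _ ?r1)) =>
  lazymatch Q with tensL (Infra.I _ ?l2) (tensL ?g (Infra.I _ ?r2)) =>
  let s := atom_src f in let s' := atom_tgt f in
  let t := atom_src g in let t' := atom_tgt g in
  let caseA := eval cbv in (Nat.leb (length l1 + length s) (length l2)) in
  let caseB := eval cbv in (Nat.leb (length l2 + length t') (length l1)) in
  lazymatch caseA with
  | true => let n := eval cbv in (length l1 + length s) in
            let m := eval cbv [skipn] in (skipn n l2) in
            use (swp l1 m r2 f g)
  | false => lazymatch caseB with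
     | true => let n := eval cbv in (length l2 + length t') in
               let m := eval cbv [skipn] in (skipn n l1) in
               use (eq_sym (swp l2 m r1 g f))
     | false => fail "layers do not commute"
     end end end end.
Ltac sw n := lazymatch goal with |- ?L = _ =>
  let P := chain_nth L n in let Q := chain_nth L (S n) in swap_terms P Q end.
Ltac swR n := lazymatch goal with |- _ = ?R =>
  let P := chain_nth R n in let Q := chain_nth R (S n) in swap_terms P Q end.

End Infra.
Import Infra.

Module Alg.
Set Implicit Arguments.
Unset Strict Implicit.

Section Alg.
Context {C : Category} (B : Braided C) (H : BraidedGroup B).
Local Notation "f ⊗ g" := (@tensL _ B _ _ _ _ f g) (at level 34, right associativity).
Local Notation A := (bgA H).
Local Notation HL := (HomL B).
Local Notation I := (I B).
Local Notation Ψ := (braidL B).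

Definition mu : HL [A;A] [A] := bg_mu H.
Definition et : HL [] [A] := bg_eta H.
Definition de : HL [A] [A;A] := bg_Delta H.
Definition ep : HL [A] [] := bg_eps H.
Definition S : HL [A] [A] := bg_S H.

Ltac tra := unfold mu, et, de, ep, S, tensL, braidL, Infra.I, tr; simpl ev; tsplit; ccast.
Ltac viaH Hx := match type of Hx with ?L = ?R => transitivity L; [pis| transitivity R; [exact Hx | pis]] end.
Ltac prep Hx := unfold mid, assocm, assocmI, lu, ru, luI, ruI in Hx; revert Hx; tsplit; ccast; intro Hx.

Lemma mu_assoc : mu ∘ (mu ⊗ I [A]) = mu ∘ (I [A] ⊗ mu).
Proof. pose proof (bg_mu_assoc H) as Hx. prep Hx. tra. rewrite comp_assoc, Hx. ccast. reflexivity. Qed.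
Lemma mu_unitl : mu ∘ (et ⊗ I [A]) = I [A].
Proof. pose proof (bg_mu_unitl H) as Hx. prep Hx. tra. rewrite comp_assoc, Hx. ccast. reflexivity. Qed.
Lemma mu_unitr : mu ∘ (I [A] ⊗ et) = I [A].
Proof. pose proof (bg_mu_unitr H) as Hx. prep Hx. tra. rewrite comp_assoc, Hx. ccast. reflexivity. Qed.
Lemma de_coassoc : (de ⊗ I [A]) ∘ de = (I [A] ⊗ de) ∘ de.
Proof. pose proof (bg_coassoc H) as Hx. prep Hx. tra. rewrite <- Hx. pis. Qed.
Lemma de_counitl : (ep ⊗ I [A]) ∘ de = I [A].
Proof. pose proof (bg_counitl H) as Hx. prep Hx. tra. etransitivity; [|exact Hx]. pis. Qed.
Lemma de_counitr : (I [A] ⊗ ep) ∘ de = I [A].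
Proof. pose proof (bg_counitr H) as Hx. prep Hx. tra. etransitivity; [|exact Hx]. pis. Qed.
Lemma bialg : de ∘ mu = (mu ⊗ mu) ∘ (I [A] ⊗ Ψ [A] [A] ⊗ I [A]) ∘ (de ⊗ de).
Proof. pose proof (bg_bialg H) as Hx. prep Hx. tra. rewrite Hx. pis. Qed.

Lemma de_et : de ∘ et = et ⊗ et.
Proof. pose proof (bg_Delta_eta H) as Hx. prep Hx. tra. viaH Hx. Qed.
Lemma ep_mu : ep ∘ mu = ep ⊗ ep.
Proof. pose proof (bg_eps_mu H) as Hx. prep Hx. tra. viaH Hx. Qed.
Lemma ep_et : ep ∘ et = I [].
Proof. pose proof (bg_eps_eta H) as Hx. prep Hx. tra. exact Hx. Qed.
Lemma antl : mu ∘ (S ⊗ I [A]) ∘ de = et ∘ ep.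
Proof. pose proof (bg_antipode_l H) as Hx. prep Hx. tra. exact Hx. Qed.
Lemma antr : mu ∘ (I [A] ⊗ S) ∘ de = et ∘ ep.
Proof. pose proof (bg_antipode_r H) as Hx. prep Hx. tra. exact Hx. Qed.

Section Mod.
Variable X : RCrossedModule H.
Local Notation Xo := (cmX X).
Definition al : HL [Xo; A] [Xo] := cm_act X.
Definition rh : HL [Xo] [Xo; A] := cm_coact X.
Ltac trb := unfold al, rh; tra.

Lemma al_assoc : al ∘ (al ⊗ I [A]) = al ∘ (I [Xo] ⊗ mu).
Proof. pose proof (cm_act_assoc X) as Hx. prep Hx. trb. rewrite comp_assoc, Hx. ccast. reflexivity. Qed.
Lemma al_unit : al ∘ (I [Xo] ⊗ et) = I [Xo].
Proof. pose proof (cm_act_unit X) as Hx. prep Hx. trb. rewrite comp_assoc, Hx. ccast. reflexivity. Qed.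
Lemma rh_coassoc : (rh ⊗ I [A]) ∘ rh = (I [Xo] ⊗ de) ∘ rh.
Proof. pose proof (cm_coact_coassoc X) as Hx. prep Hx. trb. rewrite Hx. ccast. reflexivity. Qed.
Lemma rh_counit : (I [Xo] ⊗ ep) ∘ rh = I [Xo].
Proof. pose proof (cm_coact_counit X) as Hx. prep Hx. trb. rewrite Hx. ccast. reflexivity. Qed.
Lemma YD : (I [Xo] ⊗ mu) ∘ (Ψ [A] [Xo] ⊗ I [A]) ∘ (I [A] ⊗ (rh ∘ al)) ∘ (Ψ [Xo] [A] ⊗ I [A]) ∘ (I [Xo] ⊗ de)
  = (al ⊗ mu) ∘ (I [Xo] ⊗ Ψ [A] [A] ⊗ I [A]) ∘ (rh ⊗ de).
Proof. pose proof (cm_YD X) as Hx. prep Hx. trb. viaH Hx. Qed.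
End Mod.
End Alg.

End Alg.
Import Alg.

Module Alg2.
Set Implicit Arguments.
Unset Strict Implicit.

Section Alg2.
Context {C : Category} (B : Braided C) (H : BraidedGroup B).
Local Notation "f ⊗ g" := (@tensL _ B _ _ _ _ f g) (at level 34, right associativity).
Local Notation A := (bgA H).
Local Notation HL := (HomL B).
Local Notation I := (I B).
Local Notation Ψ := (braidL B).
Local Notation mu := (mu H).
Local Notation et := (et H).
Local Notation de := (de H).
Local Notation ep := (ep H).
Local Notation S := (S H).

Definition m2 : HL [A;A;A;A] [A;A] := (mu ⊗ mu) ∘ (I [A] ⊗ Ψ [A] [A] ⊗ I [A]).

Lemma br_et_l : Ψ [A] [A] ∘ (et ⊗ I [A]) = I [A] ⊗ et.
Proof. rewrite braidL_nat, braidL_nil_l'. clean. apply Icomp_r. Qed.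
Lemma br_et_r : Ψ [A] [A] ∘ (I [A] ⊗ et) = et ⊗ I [A].
Proof. rewrite braidL_nat, braidL_nil_r'. clean. apply Icomp_r. Qed.

Lemma m2_unitl : m2 ∘ ((et ⊗ et) ⊗ I [A;A]) = I [A;A].
Proof.
  unfold m2. wrap. nf. use (swp [] [] [A;A] et et). usew br_et_l [A] [A]. usew (mu_unitl H) [A;A] ([] : list C). usew (mu_unitl H) ([] : list C) [A]. reflexivity.
Qed.
Lemma m2_unitr : m2 ∘ (I [A;A] ⊗ (et ⊗ et)) = I [A;A].
Proof.
  unfold m2. wrap. nf. usew br_et_r [A] [A]. use (swp [A] [A] [] et et).
  usew (mu_unitr H) [A;A] ([] : list C). usew (mu_unitr H) ([] : list C) [A]. reflexivity.
Qed.
Lemma m2_assoc : m2 ∘ (m2 ⊗ I [A;A]) = m2 ∘ (I [A;A] ⊗ m2).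
Proof.
  unfold m2. wrap. nf.
  sw 3. usew (braidL_nat mu (I [A])) [A] [A]. usew (braidL_hex1' B [A] [A] [A]) [A] [A].
  sw 4. sw 3. sw 2. sw 1.
  usew (mu_assoc H) ([] : list C) [A]. usew (mu_assoc H) [A;A;A] ([] : list C).
  usew (braidL_nat (I [A]) mu) [A] [A]. usew (braidL_hex2' B [A] [A] [A]) [A] [A].
  swR 1. swR 4. swR 3. swR 5. reflexivity.
Qed.
End Alg2.

End Alg2.
Import Alg2.

Module Alg3.
Set Implicit Arguments.
Unset Strict Implicit.

Section Alg3.
Context {C : Category} (B : Braided C) (H : BraidedGroup B).
Local Notation "f ⊗ g" := (@tensL _ B _ _ _ _ f g) (at level 34, right associativity).
Local Notation A := (bgA H).
Local Notation HL := (HomL B).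
Local Notation I := (I B).
Local Notation Ψ := (braidL B).
Local Notation mu := (mu H).
Local Notation et := (et H).
Local Notation de := (de H).
Local Notation ep := (ep H).
Local Notation S := (S H).

Local Notation M2 := (Alg2.m2 H).
Definition gS : HL [A] [A;A] := (S ⊗ S) ∘ Ψ [A] [A] ∘ de.
Lemma br_ep : (I [A] ⊗ ep) ∘ Ψ [A] [A] = ep ⊗ I [A].
Proof. rewrite <- braidL_nat, braidL_nil_l'. clean. apply Icomp_l. Qed.
Lemma br_ep' : (ep ⊗ I [A]) ∘ Ψ [A] [A] = I [A] ⊗ ep.
Proof. rewrite <- braidL_nat, braidL_nil_r'. clean. apply Icomp_l. Qed.

Lemma C1 : M2 ∘ (de ⊗ gS) ∘ de = (et ⊗ et) ∘ ep.
Proof.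
  unfold Alg2.m2, gS. wrap. nf.
  usew (eq_sym (braidL_nat S S)) [A;A] ([] : list C).
  usew (eq_sym (braidL_hex1' B [A] [A] [A])) [A] ([] : list C).
  usew (eq_sym (de_coassoc H)) ([] : list C) ([] : list C).
  usew (de_coassoc H) ([] : list C) [A].
  usew (braidL_nat (I [A] ⊗ S) (I [A])) [A] ([] : list C).
  usew (braidL_nat (I [A;A]) S) [A] ([] : list C).
  usew (braidL_nat de (I [A])) [A] ([] : list C).
  sw 2. sw 1. usew (antr H) [A;A] ([] : list C).
  usew br_ep [A] ([] : list C). usew (de_counitr H) ([] : list C) [A].
  sw 1. sw 0. usew (antr H) ([] : list C) ([] : list C).
  swR 0. reflexivity.
Qed.
Lemma bialg_m2 : de ∘ mu = M2 ∘ (de ⊗ de).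
Proof. rewrite (bialg H). unfold m2. rassoc. reflexivity. Qed.

Lemma S2 : de ∘ S = gS.
Proof.
  transitivity (M2 ∘ (M2 ⊗ I [A;A]) ∘ ((de ∘ S) ⊗ de ⊗ gS) ∘ (de ⊗ I [A]) ∘ de).
  - symmetry. wrap. nf.
    usew (de_coassoc H) ([] : list C) ([] : list C).
    usew (m2_assoc H) ([] : list C) ([] : list C).
    sw 3. sw 4. sw 5. sw 2. sw 3. sw 4.
    usew C1 [A;A] ([] : list C).
    usew (m2_unitr H) ([] : list C) ([] : list C).
    sw 0. sw 1. usew (de_counitr H) ([] : list C) ([] : list C). reflexivity.
  - wrap. nf.
    sw 3. usew (eq_sym bialg_m2) ([] : list C) [A;A].
    sw 4. usew (antl H) ([] : list C) [A;A].
    usew (de_et H) ([] : list C) [A;A].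
    usew (m2_unitl H) ([] : list C) ([] : list C).
    sw 0. usew (de_counitl H) ([] : list C) ([] : list C). reflexivity.
Qed.
End Alg3.

End Alg3.
Import Alg3.

Module Alg4.
Set Implicit Arguments.
Unset Strict Implicit.

Section Alg4.
Context {C : Category} (B : Braided C) (H : BraidedGroup B).
Local Notation "f ⊗ g" := (@tensL _ B _ _ _ _ f g) (at level 34, right associativity).
Local Notation A := (bgA H).
Local Notation HL := (HomL B).
Local Notation I := (I B).
Local Notation Ψ := (braidL B).
Local Notation mu := (mu H).
Local Notation et := (et H).
Local Notation de := (de H).
Local Notation ep := (ep H).
Local Notation S := (S H).

Local Notation M2 := (Alg2.m2 H).
Definition d2 : HL [A;A] [A;A;A;A] := (I [A] ⊗ Ψ [A] [A] ⊗ I [A]) ∘ (de ⊗ de).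
Definition hS : HL [A;A] [A] := mu ∘ Ψ [A] [A] ∘ (S ⊗ S).
Lemma d2_counitl : ((ep ⊗ ep) ⊗ I [A;A]) ∘ d2 = I [A;A].
Proof. unfold d2. wrap. nf. usew (br_ep' H) [A] [A]. sw 1.
  usew (de_counitl H) [A] ([] : list C). usew (de_counitl H) ([] : list C) [A]. reflexivity. Qed.
Lemma d2_counitr : (I [A;A] ⊗ (ep ⊗ ep)) ∘ d2 = I [A;A].
Proof. unfold d2. wrap. nf. sw 0. usew (br_ep H) [A] [A]. sw 2. sw 1.
  usew (de_counitr H) ([] : list C) [A]. usew (de_counitr H) [A] ([] : list C). reflexivity. Qed.
Lemma d2_coassoc : (d2 ⊗ I [A;A]) ∘ d2 = (I [A;A] ⊗ d2) ∘ d2.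
Proof. unfold d2. wrap. nf.
  usew (eq_sym (braidL_nat (I [A]) de)) [A] [A]. usew (braidL_hex2' B [A] [A] [A]) [A] [A].
  swR 1. usew (eq_sym (braidL_nat de (I [A]))) [A] [A]. usew (braidL_hex1' B [A] [A] [A]) [A] [A].
  sw 1. sw 2. sw 3. usew (de_coassoc H) ([] : list C) [A;A].
  sw 3. sw 4. usew (de_coassoc H) [A] ([] : list C).
  swR 1. swR 2. swR 3. swR 4. swR 0. reflexivity. Qed.

Lemma bialg_d2 : de ∘ mu = (mu ⊗ mu) ∘ d2.
Proof. rewrite (bialg H). unfold d2. rassoc. reflexivity. Qed.

Lemma C1' : mu ∘ (mu ⊗ hS) ∘ d2 = et ∘ (ep ⊗ ep).
Proof. unfold d2, hS. wrap. nf.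
  sw 3. sw 4. usew (braidL_nat S S) [A] ([] : list C).
  sw 4. sw 3. sw 2.
  usew (eq_sym (mu_assoc H)) ([] : list C) ([] : list C).
  usew (mu_assoc H) ([] : list C) [A].
  usew (eq_sym (braidL_hex2' B [A] [A] [A])) [A] ([] : list C).
  sw 6. usew (braidL_nat (I [A]) de) [A] ([] : list C).
  sw 3. sw 2. usew (antr H) [A] [A].
  usew (br_ep' H) [A] ([] : list C). sw 4. sw 2.
  usew (mu_unitr H) ([] : list C) [A].
  usew (antr H) ([] : list C) ([] : list C). reflexivity.
Qed.
Lemma S1 : S ∘ mu = hS.
Proof.
  transitivity (mu ∘ (mu ⊗ I [A]) ∘ ((S ∘ mu) ⊗ mu ⊗ hS) ∘ (d2 ⊗ I [A;A]) ∘ d2).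
  - symmetry. wrap. nf.
    usew (mu_assoc H) ([] : list C) ([] : list C).
    usew d2_coassoc ([] : list C) ([] : list C).
    sw 1. sw 2. usew C1' [A;A] ([] : list C).
    sw 2. sw 1. usew (mu_unitr H) ([] : list C) ([] : list C).
    usew d2_counitr ([] : list C) ([] : list C). reflexivity.
  - wrap. nf.
    sw 4. sw 3. usew (eq_sym bialg_d2) ([] : list C) [A;A].
    sw 3. usew (antl H) ([] : list C) [A].
    usew (mu_unitl H) ([] : list C) ([] : list C).
    sw 0. usew (ep_mu H) ([] : list C) [A;A].
    usew d2_counitl ([] : list C) ([] : list C). reflexivity.
Qed.
End Alg4.

End Alg4.
Import Alg4.

Module Main.
Set Implicit Arguments.
Unset Strict Implicit.

Section Main.
Context {C : Category} (B : Braided C) (H : BraidedGroup B).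
Local Notation "f ⊗ g" := (@tensL _ B _ _ _ _ f g) (at level 34, right associativity).
Local Notation A := (bgA H).
Local Notation HL := (HomL B).
Local Notation I := (I B).
Local Notation Ψ := (braidL B).
Local Notation mu := (mu H).
Local Notation et := (et H).
Local Notation de := (de H).
Local Notation ep := (ep H).
Local Notation S := (S H).
Local Notation al := (al (H:=H)).
Local Notation rh := (rh (H:=H)).

Definition th (X Y : RCrossedModule H) : HL [cmX X; cmX Y] [cmX Y; cmX X] :=
  (I [cmX Y] ⊗ al X) ∘ (Ψ [cmX X] [cmX Y] ⊗ I [A]) ∘ (I [cmX X] ⊗ rh Y).
Definition sg (X : RCrossedModule H) : HL [cmX X] [cmX X] := al X ∘ (I [cmX X] ⊗ S) ∘ rh X.
Definition rh2 (Y X : RCrossedModule H) : HL [cmX Y; cmX X] [cmX Y; cmX X; A] :=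
  (I [cmX Y; cmX X] ⊗ mu) ∘ (I [cmX Y] ⊗ Ψ [A] [cmX X] ⊗ I [A]) ∘ (rh Y ⊗ rh X).
Definition al2 (Y X : RCrossedModule H) : HL [cmX Y; cmX X; A] [cmX Y; cmX X] :=
  (al Y ⊗ al X) ∘ (I [cmX Y] ⊗ Ψ [cmX X] [A] ⊗ I [A]) ∘ (I [cmX Y; cmX X] ⊗ de).
Definition sg2 (Y X : RCrossedModule H) := al2 Y X ∘ (I [cmX Y; cmX X] ⊗ S) ∘ rh2 Y X.

Ltac trc := unfold th, sg, sg2, rh2, al2, Alg.al, Alg.rh, Alg.mu, Alg.et, Alg.de, Alg.ep, Alg.S, tensL, braidL, Infra.I, tr; simpl ev; tsplit; ccast.
Ltac trd := unfold ydbraid, sigma, tens_act, tens_coact, mid, assocm, assocmI; tsplit; ccast.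

Lemma th_ok (X Y : RCrossedModule H) : ydbraid X Y = th X Y.
Proof. trd. trc. pis. Qed.
Lemma sg_ok (X : RCrossedModule H) : sigma (cm_act X) (cm_coact X) = sg X.
Proof. trd. trc. pis. Qed.
Lemma sg2_ok (Y X : RCrossedModule H) : sigma (tens_act Y X) (tens_coact Y X) = sg2 Y X.
Proof. trd. trc. pis. Qed.
Lemma tens_ok (X Y : RCrossedModule H) : @tensm C B (cmX Y) (cmX X) (cmX Y) (cmX X) (sg Y) (sg X) = sg Y ⊗ sg X.
Proof. unfold tensL. simpl ev. ccast. reflexivity. Qed.
Lemma braid_ok (X Y : RCrossedModule H) : braid B (cmX X) (cmX Y) = Ψ [cmX X] [cmX Y].
Proof. unfold braidL. simpl ev. ccast. reflexivity. Qed.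


Section Mods.
Variables X Y : RCrossedModule H.
Local Notation Xo := (cmX X).
Local Notation Yo := (cmX Y).
Lemma TA : al2 Y X ∘ (al2 Y X ⊗ I [A]) = al2 Y X ∘ (I [Yo; Xo] ⊗ mu).
Proof. unfold al2. wrap. nf.
  usew (bialg H) [Yo;Xo] ([] : list C).
  usew (braidL_nat (I [Xo]) mu) [Yo] [A].
  usew (braidL_hex2' B [Xo] [A] [A]) [Yo] [A].
  sw 3. sw 2. sw 4.
  usew (braidL_nat (al X) (I [A])) [Yo;A] [A].
  usew (braidL_hex1' B [Xo] [A] [A]) [Yo;A] [A].
  sw 1. usew (al_assoc X) [Yo;A;A] ([] : list C).
  usew (al_assoc Y) ([] : list C) [Xo].
  swR 7. swR 4. swR 5. swR 6. swR 3. swR 1. reflexivity.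
Qed.
Lemma sg_def (Z : RCrossedModule H) : sg Z = al Z ∘ (I [cmX Z] ⊗ S) ∘ rh Z.
Proof. reflexivity. Qed.

Lemma LL : (I [Xo] ⊗ mu) ∘ (Ψ [A] [Xo] ⊗ I [A]) ∘ (I [A] ⊗ (rh X ∘ al X)) ∘ (Ψ [Xo] [A] ⊗ I [A])
   ∘ (I [Xo] ⊗ de) ∘ (I [Xo] ⊗ S) ∘ rh X = sg X ⊗ et.
Proof. wrap. nf. usew (YD X) ([] : list C) ([] : list C).
  usew (S2 H) [Xo] ([] : list C). unfold gS. nf.
  sw 3. sw 4. sw 5. sw 6. usew (rh_coassoc X) ([] : list C) ([] : list C).
  usew (eq_sym (de_coassoc H)) [Xo] ([] : list C).
  usew (eq_sym (braidL_nat S S)) [Xo;A] ([] : list C).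
  usew (eq_sym (braidL_hex1' B [A] [A] [A])) [Xo] ([] : list C).
  usew (braidL_nat (I [A] ⊗ S) (I [A])) [Xo] ([] : list C).
  usew (braidL_nat (I [A;A]) S) [Xo] ([] : list C).
  usew (braidL_nat de (I [A])) [Xo] ([] : list C).
  sw 2. sw 1. usew (antr H) [Xo;A] ([] : list C).
  usew (br_ep H) [Xo] ([] : list C). usew (de_counitl H) [Xo] ([] : list C).
  unfold sg. nf. sw 2. reflexivity.
Qed.

Lemma mainL : th Y X ∘ sg2 Y X ∘ th X Y = Ψ [Yo] [Xo] ∘ (sg Y ⊗ sg X) ∘ Ψ [Xo] [Yo].
Proof. unfold sg2, rh2, th. wrap. nf.
  sw 7. sw 8. usew (eq_sym (braidL_nat (I [Xo]) (rh Y))) ([] : list C) [A].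
  usew (rh_coassoc Y) [Xo] ([] : list C).
  usew (braidL_hex2' B [Xo] [Yo] [A]) ([] : list C) [A].
  sw 10. usew (YD X) [Yo] ([] : list C).
  sw 4. usew (S1 H) [Yo;Xo;A] ([] : list C).
  unfold hS. nf.
  sw 4. usew (eq_sym TA) ([] : list C) ([] : list C).
  unfold al2. nf.
  usew (braidL_nat S S) [Yo;Xo;A] ([] : list C).
  usew (eq_sym (braidL_hex2' B [A] [A] [A])) [Yo;Xo] ([] : list C).
  sw 15. usew (braidL_nat (I [A]) de) [Yo;Xo] ([] : list C).
  sw 11. usew (S2 H) [Yo;Xo] [A]. unfold gS. nf.
  sw 13. sw 14. usew (eq_sym (de_coassoc H)) [Yo;Xo] [A].
  usew (eq_sym (braidL_nat S S)) [Yo;Xo] [A].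
  usew (eq_sym (braidL_hex1' B [Xo] [A] [A])) [Yo] [A].
  usew (eq_sym (braidL_nat (al X) (I [A]))) [Yo] [A].
  sw 10. sw 11. sw 10. usew (al_assoc X) [Yo] [A;A].
  sw 11. sw 12. sw 13. sw 11. sw 10.
  usew (antr H) [Yo;Xo] [A;A].
  sw 10. usew (al_unit X) [Yo] [A;A].
  sw 10. usew (de_counitl H) [Yo;Xo] [A].
  sw 2. usew (braidL_nat (al Y) (I [Xo])) ([] : list C) [A].
  usew (al_assoc Y) [Xo] ([] : list C).
  usew (braidL_hex1' B [Yo] [A] [Xo]) ([] : list C) [A].
  sw 1.
  sw 10. usew (eq_sym (braidL_nat S S)) [Yo;Xo] ([] : list C).
  usew (eq_sym (braidL_hex1' B [Xo] [A] [A])) [Yo] ([] : list C).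
  usew (braidL_nat (I [Xo] ⊗ S) S) [Yo] ([] : list C).
  usew (braidL_nat (rh X) (I [A])) [Yo] ([] : list C).
  usew (eq_sym (braidL_hex2' B [Xo] [Yo] [A])) ([] : list C) ([] : list C).
  usew (braidL_nat (I [Xo]) (rh Y)) ([] : list C) ([] : list C).
  sw 9. sw 10. sw 8. sw 9.
  usew LL [Yo] ([] : list C).
  sw 2. sw 1. usew (al_unit Y) [Xo] ([] : list C).
  usew (eq_sym (sg_def Y)) ([] : list C) [Xo].
  sw 1. reflexivity.
Qed.
End Mods.
End Main.


End Main.
Import Main.

Unset Implicit Arguments.
Theorem mainTheorem9 (C : Category) (B : Braided C) (H : BraidedGroup B)
    (X Y : RCrossedModule H) :
  ydbraid Y X ∘ sigma (tens_act Y X) (tens_coact Y X) ∘ ydbraid X Y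
  = braid B (cmX Y) (cmX X)
    ∘ tensm B (sigma (cm_act Y) (cm_coact Y)) (sigma (cm_act X) (cm_coact X))
    ∘ braid B (cmX X) (cmX Y).
Proof.
  rewrite (th_ok X Y), (th_ok Y X), (sg2_ok Y X), (sg_ok X), (sg_ok Y), (tens_ok X Y), (braid_ok X Y), (braid_ok Y X).
  apply mainL.
Qed.
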